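(* Let $L=(G,l)$ be a linkage whose underlying graph $G$ is series parallel. Then $L$ is realisable if and only if for every subgraph $H$ of $G$ that is a polygonal graph, the linkage $(H,l|_H)$ is realisable.
   Context: A graph has a finite vertex set and a finite multiset of edges, each an unordered pair of distinct vertices (parallel edges allowed, no loops). A polygonal graph is a graph isomorphic to the graph with vertex set $\{1,\dots,n\}$ ($n\ge2$) and edge multiset $\{\{i,i+1\}:1\le i\le n-1\}\cup\{\{n,1\}\}$ (for $n=2$ this is two parallel edges). A linkage is $L=(G,l)$ with $l:E\to\mathbb R_{\ge0}$; it is realisable if there exists $p:V\to\mathbb R^2$ with $|p(u)-p(v)|=l(\{u,v\})$ for every edge $\{u,v\}$. A TTG is $(G,s,t)$ with $s\ne t$; series composition $(G_1,s_1,t_1)\circ(G_2,s_2,t_2)=(G_1\cup_{t_2\sim s_1}G_2,s_2,t_1)$; parallel composition $(G_1,s_1,t_1)\|(G_2,s_2,t_2)=(G_1\cup_{s_1\sim s_2,t_1\sim t_2}G_2,s_1,t_1)$. TTSPGs are the smallest class of TTGs containing a single edge $(K_2,s,t)$ and closed under both compositions; $G$ is series parallel if $(G,s,t)$ is a TTSPG for some $s,t$. *)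

(* Defs.v *)
From Stdlib Require Import Reals.
From mathcomp Require Import all_boot.

Set Implicit Arguments.
Unset Strict Implicit.
Unset Printing Implicit Defensive.

(* A graph: finite vertex type, finite edge type (so parallel edges are
   allowed), and for each edge its (ordered representation of the unordered)
   pair of endpoints. *)
Record graph := Graph {
  gV : finType;
  gE : finType;
  gends : gE -> gV * gV }.

Definition loopless (G : graph) : Prop :=
  forall e : gE G, (gends e).1 <> (gends e).2.

Definition graph_iso (G H : graph) : Prop :=
  exists (fV : gV G -> gV H) (fE : gE G -> gE H),
    bijective fV /\ bijective fE /\
    forall e : gE G,
      gends (fE e) = (fV (gends e).1, fV (gends e).2) \/
      gends (fE e) = (fV (gends e).2, fV (gends e).1).

(* the cycle on n+2 vertices 0..n+1, edges {i, i+1 mod (n+2)};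
   for n = 0 this is two parallel edges between 0 and 1. *)
Definition cycle_graph (n : nat) : graph :=
  @Graph 'I_n.+2 'I_n.+2 (fun i => (i, ordS i)).

Definition polygonal (G : graph) : Prop :=
  exists n : nat, graph_iso (cycle_graph n) G.

Definition is_subgraph (G : graph) (VS : {set gV G}) (ES : {set gE G}) : Prop :=
  forall e : gE G, e \in ES -> (gends e).1 \in VS /\ (gends e).2 \in VS.

Definition subgraph (G : graph) (VS : {set gV G}) (ES : {set gE G})
  (h : is_subgraph VS ES) : graph :=
  @Graph {v : gV G | v \in VS} {e : gE G | e \in ES}
    (fun e => (exist (fun v => v \in VS) (gends (sval e)).1
                     (proj1 (h (sval e) (proj2_sig e))),
               exist (fun v => v \in VS) (gends (sval e)).2
                     (proj2 (h (sval e) (proj2_sig e))))).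

Definition R2 := (R * R)%type.

Definition dist2 (p q : R2) : R :=
  sqrt (Rsqr (fst p - fst q) + Rsqr (snd p - snd q)).

Definition realisable (G : graph) (l : gE G -> R) : Prop :=
  exists p : gV G -> R2,
    forall e : gE G, dist2 (p (gends e).1) (p (gends e).2) = l e.

(* Concrete two-terminal graphs: vertices 0..nv-1, list of edges, terminals. *)
Record ctg := CTG { nv : nat; cedges : seq (nat * nat); src : nat; snk : nat }.

Definition map_edges (f : nat -> nat) (s : seq (nat * nat)) :=
  [seq (f x.1, f x.2) | x <- s].

Definition K2 : ctg := CTG 2 [:: (0, 1)] 0 1.

(* series composition (G1,s1,t1) o (G2,s2,t2) = (G1 U_{t2 ~ s1} G2, s2, t1).
   G2 keeps labels 0..n2-1; vertex v of G1 becomes t2 if v = s1 and is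
   otherwise relabelled into n2 .. n1+n2-2. *)
Definition ser (G1 G2 : ctg) : ctg :=
  let f1 v := if v == src G1 then snk G2
              else if v < src G1 then nv G2 + v else nv G2 + v - 1 in
  CTG (nv G1 + nv G2 - 1)
      (map_edges f1 (cedges G1) ++ cedges G2)
      (src G2) (f1 (snk G1)).

(* parallel composition (G1,s1,t1) || (G2,s2,t2)
   = (G1 U_{s1 ~ s2, t1 ~ t2} G2, s1, t1).
   G1 keeps its labels; other vertices of G2 are relabelled into
   n1 .. n1+n2-3. *)
Definition par (G1 G2 : ctg) : ctg :=
  let f2 v := if v == src G2 then src G1
              else if v == snk G2 then snk G1
              else nv G1 + v - (src G2 < v) - (snk G2 < v) in
  CTG (nv G1 + nv G2 - 2)
      (cedges G1 ++ map_edges f2 (cedges G2))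
      (src G1) (snk G1).

Inductive spterm := SPedge | SPser of spterm & spterm | SPpar of spterm & spterm.

Fixpoint sp_interp (T : spterm) : ctg :=
  match T with
  | SPedge => K2
  | SPser A B => ser (sp_interp A) (sp_interp B)
  | SPpar A B => par (sp_interp A) (sp_interp B)
  end.

Definition ttg_iso (c : ctg) (G : graph) (s t : gV G) : Prop :=
  exists (fV : nat -> gV G) (fE : 'I_(size (cedges c)) -> gE G),
    (forall k1 k2, k1 < nv c -> k2 < nv c -> fV k1 = fV k2 -> k1 = k2) /\
    (forall v : gV G, exists2 k, k < nv c & fV k = v) /\
    bijective fE /\
    (forall i : 'I_(size (cedges c)),
       let ab := nth (0, 0) (cedges c) i in
       gends (fE i) = (fV ab.1, fV ab.2) \/
       gends (fE i) = (fV ab.2, fV ab.1)) /\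
    fV (src c) = s /\ fV (snk c) = t.

Definition TTSPG (G : graph) (s t : gV G) : Prop :=
  s <> t /\ exists T : spterm, @ttg_iso (sp_interp T) G s t.

Definition series_parallel (G : graph) : Prop :=
  exists s t : gV G, @TTSPG G s t.

(* Main.v *)
Require Import Defs.
From Stdlib Require Import Reals Lra Lia Psatz Rgeom Classical_Prop.
From mathcomp Require Import all_boot.


Set Implicit Arguments.
Unset Strict Implicit.
Section GeoS.
Local Open Scope R_scope.

Lemma dist2_sym p q : dist2 p q = dist2 q p.
Proof. rewrite /dist2; f_equal; unfold Rsqr; ring. Qed.

Lemma dist2_tri p q r : dist2 p q <= dist2 p r + dist2 r q.
Proof. exact: (triangle p.1 p.2 q.1 q.2 r.1 r.2). Qed.

Lemma dist2_ge0 p q : 0 <= dist2 p q.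
Proof. apply: sqrt_pos. Qed.

Lemma dist2_0 p q : dist2 p q = 0 -> p = q.
Proof.
case: p q => [a b] [c d]; rewrite /dist2 /= => H.
have H1 := sqrt_eq_0 _ (Rplus_le_le_0_compat _ _ (Rle_0_sqr (a-c)) (Rle_0_sqr (b-d))) H.
unfold Rsqr in H1.
have [Z1 Z2] := Rplus_eq_R0 _ _ (Rle_0_sqr (a-c)) (Rle_0_sqr (b-d)) H1.
have Ha : a = c by case: (Rmult_integral _ _ Z1); lra.
have Hb : b = d by case: (Rmult_integral _ _ Z2); lra.
by rewrite Ha Hb.
Qed.

Lemma dist2_x0 (x : R) : 0 <= x -> dist2 (0,0) (x,0) = x.
Proof.
move=> hx; rewrite /dist2 /=.
replace (Rsqr (0-x) + Rsqr (0-0)) with (Rsqr x) by (unfold Rsqr; ring).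
by rewrite sqrt_Rsqr.
Qed.

Definition isom (f : R2 -> R2) := forall x y, dist2 (f x) (f y) = dist2 x y.

Lemma rigid (P1 P2 Q1 Q2 : R2) : dist2 P1 P2 = dist2 Q1 Q2 ->
  exists f, isom f /\ f P1 = Q1 /\ f P2 = Q2.
Proof.
move=> H.
case: (Req_dec (dist2 P1 P2) 0) => H0.
- have E1 := dist2_0 H0. rewrite H0 in H. have E2 := dist2_0 (esym H).
  exists (fun x => (x.1 + (Q1.1 - P1.1), x.2 + (Q1.2 - P1.2))); split; last split.
  + move=> [a b] [c d]; rewrite /dist2 /=; f_equal; unfold Rsqr; ring.
  + case: (P1) => a b; case: (Q1) => c d /=; f_equal; ring.
  + rewrite -E1 -E2; case: (P1) => a b; case: (Q1) => c d /=; f_equal; ring.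
- move: H H0; case: P1 => a b; case: P2 => c d; case: Q1 => e g; case: Q2 => h k.
  rewrite /dist2 /= => H H0.
  set ux := c - a in H H0 *. set uy := d - b in H H0 *.
  set wx := h - e in H *. set wy := k - g in H *.
  have Hu : ux*ux + uy*uy <> 0.
  { move=> Z; apply: H0. replace (Rsqr (a-c) + Rsqr (b-d)) with (ux*ux+uy*uy)
      by (rewrite /ux /uy; unfold Rsqr; ring). by rewrite Z sqrt_0. }
  have Hw : wx*wx + wy*wy = ux*ux + uy*uy.
  { have := f_equal Rsqr H. rewrite !Rsqr_sqrt;
      try (apply: Rplus_le_le_0_compat; apply: Rle_0_sqr).
    rewrite /ux /uy /wx /wy; unfold Rsqr => E.
    have -> : (h-e)*(h-e)+(k-g)*(k-g) = (e-h)*(e-h)+(g-k)*(g-k) by ring.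
    have -> : (c-a)*(c-a)+(d-b)*(d-b) = (a-c)*(a-c)+(b-d)*(b-d) by ring.
    by rewrite E. }
  set rr := ux*ux + uy*uy in Hu Hw.
  set cc := (ux*wx + uy*wy)/rr. set ss := (ux*wy - uy*wx)/rr.
  have Hcs : cc*cc + ss*ss = 1.
  { have key : (ux*wx+uy*wy)*(ux*wx+uy*wy) + (ux*wy-uy*wx)*(ux*wy-uy*wx) = rr*rr.
    { transitivity (rr * (wx*wx+wy*wy)); first by rewrite /rr; ring.
      by rewrite Hw. }
    rewrite /cc /ss.
    transitivity (((ux*wx+uy*wy)*(ux*wx+uy*wy) + (ux*wy-uy*wx)*(ux*wy-uy*wx))/(rr*rr)).
    field; exact Hu. rewrite key; field; exact Hu. }
  exists (fun x => (e + (cc*(x.1 - a) - ss*(x.2 - b)), g + (ss*(x.1-a) + cc*(x.2-b)))).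
  split; last split.
  + move=> [x1 x2] [y1 y2]; rewrite /dist2 /=; f_equal; unfold Rsqr.
    transitivity ((cc*cc+ss*ss)*((x1-y1)*(x1-y1)+(x2-y2)*(x2-y2))); first ring.
    rewrite Hcs; ring.
  + rewrite /= !Rminus_diag !Rmult_0_r. f_equal; ring.
  + rewrite /=. fold ux uy. f_equal.
    * have -> : cc * ux - ss * uy = wx.
      { rewrite /cc /ss. field_simplify; [|exact Hu]. rewrite /rr. field. exact Hu. }
      rewrite /wx; ring.
    * have -> : ss * ux + cc * uy = wy.
      { rewrite /cc /ss. field_simplify; [|exact Hu]. rewrite /rr. field. exact Hu. }
      rewrite /wy; ring.
Qed.

Lemma tri_exists a b c : 0 <= a -> 0 <= b -> 0 <= c ->
  a <= b + c -> b <= a + c -> c <= a + b ->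
  exists Y, dist2 (0,0) Y = b /\ dist2 Y (c,0) = a.
Proof.
move=> ha hb hc h1 h2 h3.
case: (Req_dec c 0) => hc0.
- exists (b, 0). rewrite dist2_x0 //; split => //.
  rewrite dist2_sym hc0 dist2_x0 //. lra.
- have cpos : 0 < c by lra.
  pose x := (b*b - a*a + c*c)/(2*c).
  have Px : 0 <= b*b - x*x.
  { have E : b*b - x*x = ((a - b + c)*(a + b - c))*((b + c - a)*(b+c+a))/(4*(c*c)).
    { rewrite /x. field. lra. }
    rewrite E. apply: Rmult_le_pos; last first.
    { apply: Rlt_le; apply: Rinv_0_lt_compat. have := Rmult_lt_0_compat _ _ cpos cpos. lra. }
    apply: Rmult_le_pos; apply: Rmult_le_pos; lra. }
  exists (x, sqrt (b*b - x*x)). rewrite /dist2 /=. split.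
  + have -> : Rsqr (0 - x) + Rsqr (0 - sqrt (b*b - x*x)) = Rsqr b.
    { rewrite /Rsqr. have -> : (0 - sqrt (b * b - x * x)) * (0 - sqrt (b * b - x * x))
       = sqrt (b * b - x * x) * sqrt (b * b - x * x) by ring.
      rewrite sqrt_sqrt //. ring. }
    by rewrite sqrt_Rsqr.
  + have -> : Rsqr (x - c) + Rsqr (sqrt (b*b - x*x) - 0) = Rsqr a.
    { rewrite /Rsqr. have -> : (sqrt (b * b - x * x) - 0) * (sqrt (b * b - x * x) - 0)
       = sqrt (b * b - x * x) * sqrt (b * b - x * x) by ring.
      rewrite sqrt_sqrt //. rewrite /x. field. lra. }
    by rewrite sqrt_Rsqr.
Qed.

End GeoS.
Unset Implicit Arguments.


Ltac natify := repeat match goal with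
 | H : is_true (_ && _) |- _ => let a := fresh "N" in let b := fresh "N" in
      destruct (andP H) as [a b]; clear H
 | |- is_true (_ && _) => apply/andP; split
 | H : is_true (leq _ _) |- _ => let H2 := fresh "N" in have H2 := elimT leP H; clear H
 | H : (leq _ _) = false |- _ => let H2 := fresh "N" in have H2 := negbT H; clear H
 | H : is_true (~~ (leq _ _)) |- _ => rewrite -ltnNge in H
 | H : is_true (@eq_op _ _ _) |- _ => let H2 := fresh "N" in have H2 := elimT eqP H; clear H
 | H : is_true (~~ (@eq_op _ _ _)) |- _ => let H2 := fresh "N" in have H2 := elimN eqP H; clear H
 | H : (@eq_op _ _ _) = false |- _ => let H2 := fresh "N" in have H2 := negbT H; clear H
 end.
Ltac slia := intros; natify; try unfold addn, subn, muln in *;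
  try match goal with
  | |- is_true (leq _ _) => apply/leP
  | |- is_true (@eq_op _ _ _) => apply/eqP
  | |- is_true (~~ (@eq_op _ _ _)) => apply/eqP
  end; try unfold addn, subn, muln; lia.

Goal forall a b c : nat, a < b -> b <= c - 1 -> c != 3 -> a + 1 < c.
move=> a b c H1 H2 H3. slia. Qed.

Definition ends (c : ctg) i := nth (0, 0) (cedges c) i.
Definition sz (c : ctg) := size (cedges c).
Notation CT := sp_interp.

Definition fser (c1 c2 : ctg) v :=
  if v == src c1 then snk c2 else if v < src c1 then nv c2 + v else nv c2 + v - 1.
Definition fpar (c1 c2 : ctg) v :=
  if v == src c2 then src c1 else if v == snk c2 then snk c1
  else nv c1 + v - (src c2 < v) - (snk c2 < v).

Lemma ends_ser c1 c2 i : ends (ser c1 c2) i =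
  if i < sz c1 then (fser c1 c2 (ends c1 i).1, fser c1 c2 (ends c1 i).2)
  else ends c2 (i - sz c1).
Proof.
rewrite /ends /ser /= nth_cat size_map /sz; case: ifP => // H.
by rewrite (nth_map (0,0)).
Qed.

Lemma ends_par c1 c2 i : i < sz c1 + sz c2 -> ends (par c1 c2) i =
  if i < sz c1 then ends c1 i
  else (fpar c1 c2 (ends c2 (i - sz c1)).1, fpar c1 c2 (ends c2 (i - sz c1)).2).
Proof.
rewrite /ends /par /= nth_cat /sz => Hi; case: ifP => // H.
by rewrite (nth_map (0,0)) //; slia.
Qed.

Lemma sz_ser c1 c2 : sz (ser c1 c2) = sz c1 + sz c2.
Proof. by rewrite /sz /= size_cat size_map. Qed.
Lemma sz_par c1 c2 : sz (par c1 c2) = sz c1 + sz c2.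
Proof. by rewrite /sz /= size_cat size_map. Qed.

Definition cinv (c : ctg) := src c = 0 /\ 0 < snk c /\ snk c < nv c /\ 0 < sz c /\
  forall i, i < sz c -> (ends c i).1 < nv c /\ (ends c i).2 < nv c.

Lemma fser_val c1 c2 v : src c1 = 0 ->
  fser c1 c2 v = if v == 0 then snk c2 else nv c2 + v - 1.
Proof. by rewrite /fser => ->; case: (v == 0). Qed.

Lemma fpar_val c1 c2 v : src c1 = 0 -> src c2 = 0 ->
  fpar c1 c2 v = if v == 0 then 0 else if v == snk c2 then snk c1
                 else nv c1 + v - 1 - (snk c2 < v).
Proof.
rewrite /fpar => -> ->; case: eqP => // /eqP H; case: ifP => // _.
by rewrite lt0n H.
Qed.

Lemma cinv_ser c1 c2 : cinv c1 -> cinv c2 -> cinv (ser c1 c2).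
Proof.
move=> [s1 [t1 [t1n [z1 e1]]]] [s2 [t2 [t2n [z2 e2]]]].
rewrite /cinv sz_ser. rewrite /=.
change (if snk c1 == src c1 then snk c2
    else if snk c1 < src c1 then nv c2 + snk c1 else nv c2 + snk c1 - 1)
  with (fser c1 c2 (snk c1)).
rewrite fser_val //.
have -> : (snk c1 == 0) = false by apply/eqP; slia.
split => //. split; [slia|]. split; [slia|]. split; [slia|].
move=> i Hi. rewrite ends_ser !fser_val //. case: ifP => H.
+ have [a1 a2] := e1 i H.
  split => /=; case: ifP => _; slia.
+ have [a1 a2] := e2 (i - sz c1) ltac:(slia). split => /=; slia.
Qed.

Lemma cinv_par c1 c2 : cinv c1 -> cinv c2 -> cinv (par c1 c2).
Proof.
move=> [s1 [t1 [t1n [z1 e1]]]] [s2 [t2 [t2n [z2 e2]]]].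
rewrite /cinv sz_par. rewrite /=.
split => //. split; [slia|]. split; [slia|]. split; [slia|].
move=> i Hi. rewrite ends_par // !fpar_val //. case: ifP => H.
+ have [a1 a2] := e1 i H; split; slia.
+ have [a1 a2] := e2 (i - sz c1) ltac:(slia).
  move: a1 a2; set x := (ends c2 _).1; set y := (ends c2 _).2 => a1 a2.
  split => /=; (case: ifP => ?; [slia|]); (case: ifP => ?; [slia|]).
  - case: (ltnP (snk c2) x) => ? /=; slia.
  - case: (ltnP (snk c2) y) => ? /=; slia.
Qed.

Lemma inv_CT T : cinv (CT T).
Proof.
elim: T => [|A IHA B IHB|A IHA B IHB].
- rewrite /cinv /= /sz /ends /=; do 4 (split => //).
  by move=> i; case: i.
- exact: cinv_ser.
- exact: cinv_par.
Qed.

Set Implicit Arguments.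
Unset Strict Implicit.
Section RealPart.
Local Open Scope R_scope.
Lemma choose_d (lo1 hi1 lo2 hi2 d : R) :
  (0 <= lo1 <= hi1) -> (0 <= lo2 <= hi2) ->
  (Rmax 0 (Rmax (lo1 - hi2) (lo2 - hi1)) <= d <= hi1 + hi2) ->
  exists d1 d2, (lo1 <= d1 <= hi1) /\ (lo2 <= d2 <= hi2) /\
    (d1 <= d2 + d) /\ (d2 <= d1 + d) /\ (d <= d1 + d2).
Proof.
move=> h1 h2 [hd1 hd2].
have H0 := Rmax_l 0 (Rmax (lo1 - hi2) (lo2 - hi1)).
have H1 := Rmax_r 0 (Rmax (lo1 - hi2) (lo2 - hi1)).
have H2 := Rmax_l (lo1 - hi2) (lo2 - hi1).
have H3 := Rmax_r (lo1 - hi2) (lo2 - hi1).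
case: (Rlt_le_dec d (hi1 - hi2)) => c1.
- exists (Rmax lo1 (hi2 + d)), hi2.
  have := Rmax_l lo1 (hi2 + d). have := Rmax_r lo1 (hi2 + d).
  case: (Rmax_Rle lo1 (hi2 + d) (hi2 + d)) => _.
  unfold Rmax; case: Rle_dec => ? ? ?; lra.
- case: (Rlt_le_dec d (hi2 - hi1)) => c2.
  + exists hi1, (Rmax lo2 (hi1 + d)).
    have := Rmax_l lo2 (hi1 + d). have := Rmax_r lo2 (hi1 + d).
    unfold Rmax; case: Rle_dec => ? ? ?; lra.
  + exists hi1, hi2; lra.
Qed.

Definition shL (L : nat -> R) k := fun i => L (i + k)%N.

Fixpoint hi T L : R := match T with
| SPedge => L 0%N
| SPser A B => hi A L + hi B (shL L (sz (CT A)))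
| SPpar A B => Rmin (hi A L) (hi B (shL L (sz (CT A))))
end.

Fixpoint lo T L : R := match T with
| SPedge => L 0%N
| SPser A B => Rmax 0 (Rmax (lo A L - hi B (shL L (sz (CT A))))
                            (lo B (shL L (sz (CT A))) - hi A L))
| SPpar A B => Rmax (lo A L) (lo B (shL L (sz (CT A))))
end.

Fixpoint ok T L : Prop := match T with
| SPedge => True
| SPser A B => ok A L /\ ok B (shL L (sz (CT A)))
| SPpar A B => ok A L /\ ok B (shL L (sz (CT A))) /\
     lo A L <= hi B (shL L (sz (CT A))) /\ lo B (shL L (sz (CT A))) <= hi A L
end.

Definition cnonneg c (L : nat -> R) := forall i, (i < sz c)%N -> 0 <= L i.

Lemma nn_s1 A B L : cnonneg (CT (SPser A B)) L -> cnonneg (CT A) L.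
Proof. move=> h i Hi; apply: h; rewrite /= sz_ser; slia. Qed.
Lemma nn_s2 A B L : cnonneg (CT (SPser A B)) L -> cnonneg (CT B) (shL L (sz (CT A))).
Proof. move=> h i Hi; apply: h; rewrite /= sz_ser; slia. Qed.
Lemma nn_p1 A B L : cnonneg (CT (SPpar A B)) L -> cnonneg (CT A) L.
Proof. move=> h i Hi; apply: h; rewrite /= sz_par; slia. Qed.
Lemma nn_p2 A B L : cnonneg (CT (SPpar A B)) L -> cnonneg (CT B) (shL L (sz (CT A))).
Proof. move=> h i Hi; apply: h; rewrite /= sz_par; slia. Qed.

Lemma hilo_ge0 T L : cnonneg (CT T) L -> 0 <= hi T L /\ 0 <= lo T L.
Proof.
elim: T L => [|A IHA B IHB|A IHA B IHB] L hL /=.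
- have := hL 0%N erefl; lra.
- have [h1 l1] := IHA L (nn_s1 hL).
  have [h2 l2] := IHB _ (nn_s2 hL).
  split; [lra|apply: Rmax_l].
- have [h1 l1] := IHA L (nn_p1 hL).
  have [h2 l2] := IHB _ (nn_p2 hL).
  split; [unfold Rmin; case: Rle_dec => _; lra|].
  have := Rmax_l (lo A L) (lo B (shL L (sz (CT A)))); lra.
Qed.

Lemma lo_le_hi T L : cnonneg (CT T) L -> ok T L -> lo T L <= hi T L.
Proof.
elim: T L => [|A IHA B IHB|A IHA B IHB] L hL /=.
- move=> _; lra.
- move=> [o1 o2].
  have hL1 := nn_s1 hL.
  have hL2 := nn_s2 hL.
  have := IHA L hL1 o1. have := IHB _ hL2 o2.
  have [h1 l1] := hilo_ge0 hL1. have [h2 l2] := hilo_ge0 hL2.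
  unfold Rmax; repeat case: Rle_dec => ?; lra.
- move=> [o1 [o2 [c1 c2]]].
  have hL1 := nn_p1 hL.
  have hL2 := nn_p2 hL.
  have := IHA L hL1 o1. have := IHB _ hL2 o2.
  unfold Rmax, Rmin; repeat case: Rle_dec => ?; lra.
Qed.

Definition realises c (L : nat -> R) (q : nat -> R2) :=
  forall i, (i < sz c)%N -> dist2 (q (ends c i).1) (q (ends c i).2) = L i.

Lemma realises_isom c L q f : isom f -> realises c L q -> realises c L (fun v => f (q v)).
Proof. by move=> hf hq i Hi; rewrite hf hq. Qed.

Lemma real_ser c1 c2 L q1 q2 : cinv c1 -> cinv c2 ->
  realises c1 L q1 -> realises c2 (shL L (sz c1)) q2 -> q1 0%N = q2 (snk c2) ->
  let q := fun v => if (v < nv c2)%N then q2 v else q1 (v - nv c2 + 1)%N in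
  realises (ser c1 c2) L q /\ q 0%N = q2 0%N /\ q (snk (ser c1 c2)) = q1 (snk c1).
Proof.
move=> [s1 [t1 [t1n [z1 e1]]]] [s2 [t2 [t2n [z2 e2]]]] r1 r2 J q.
have qf : forall v, (v < nv c1)%N -> q (fser c1 c2 v) = q1 v.
{ move=> v Hv; rewrite fser_val // /q; case: eqP => [->|Hv0].
  - by rewrite t2n.
  - have -> : (nv c2 + v - 1 < nv c2)%N = false by apply/negbTE; rewrite -leqNgt; slia.
    f_equal; slia. }
split; last split.
- move=> i; rewrite sz_ser => Hi; rewrite ends_ser; case: ifP => H /=.
  + have [a1 a2] := e1 i H. rewrite !qf //. exact: r1.
  + have [a1 a2] := e2 (i - sz c1)%N ltac:(slia).
    rewrite /q a1 a2. rewrite r2; last slia. rewrite /shL; f_equal; slia.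
- by rewrite /q; have -> : (0 < nv c2)%N by slia.
- rewrite [snk _]/=. change (if snk c1 == src c1 then snk c2
    else if (snk c1 < src c1)%N then (nv c2 + snk c1)%N else (nv c2 + snk c1 - 1)%N)
  with (fser c1 c2 (snk c1)). exact: qf.
Qed.

Lemma real_par c1 c2 L q1 q2 : cinv c1 -> cinv c2 ->
  realises c1 L q1 -> realises c2 (shL L (sz c1)) q2 -> q1 0%N = q2 0%N ->
  q1 (snk c1) = q2 (snk c2) ->
  let q := fun v => if (v < nv c1)%N then q1 v else
     q2 (if (v - nv c1 + 1 < snk c2)%N then (v - nv c1 + 1)%N else (v - nv c1 + 2)%N) in
  realises (par c1 c2) L q /\ q 0%N = q1 0%N /\ q (snk (par c1 c2)) = q1 (snk c1).
Proof.
move=> [s1 [t1 [t1n [z1 e1]]]] [s2 [t2 [t2n [z2 e2]]]] r1 r2 J1 J2 q.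
have qf : forall v, (v < nv c2)%N -> q (fpar c1 c2 v) = q2 v.
{ move=> v Hv; rewrite fpar_val // /q; case: eqP => [->|Hv0].
  - by rewrite ifT //; slia.
  - case: eqP => [->|Hvt]; first by rewrite ifT //; slia.
    have -> : (nv c1 + v - 1 - (snk c2 < v) < nv c1)%N = false.
    { apply/negbTE; rewrite -leqNgt; case: ltnP => ? /=; slia. }
    case: (ltnP (snk c2) v) => Hl /=.
    + rewrite ifF; first (f_equal; slia). apply/negbTE; rewrite -leqNgt; slia.
    + rewrite ifT; first (f_equal; slia). slia. }
split; last split.
- move=> i; rewrite sz_par => Hi; rewrite ends_par ?sz_par //; case: ifP => H /=.
  + have [a1 a2] := e1 i H. rewrite /q a1 a2. exact: r1.
  + have [a1 a2] := e2 (i - sz c1)%N ltac:(slia).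
    rewrite !qf // r2; last slia. rewrite /shL; f_equal; slia.
- by rewrite /q; have -> : (0 < nv c1)%N by slia.
- by rewrite /q /=; have -> : (snk c1 < nv c1)%N by slia.
Qed.

Lemma realise T L : cnonneg (CT T) L -> ok T L -> forall d, lo T L <= d <= hi T L ->
  exists q, realises (CT T) L q /\ dist2 (q 0%N) (q (snk (CT T))) = d.
Proof.
elim: T L => [|A IHA B IHB|A IHA B IHB] L hL.
- move=> _ d /= hd. have Ed : d = L 0%N by lra.
  have d0 : 0 <= d by have := hL 0%N erefl; lra.
  exists (fun v => if v == 0%N then (0,0) else (d,0)); split; last by rewrite /= dist2_x0.
  move=> i; rewrite /sz /= => Hi. have -> : i = 0%N by slia.
  by rewrite /ends /= dist2_x0.
- change (CT (SPser A B)) with (ser (CT A) (CT B)).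
  move=> [o1 o2] d /= hd.
  have hL1 := nn_s1 hL. have hL2 := nn_s2 hL.
  have [h1 l1] := hilo_ge0 hL1. have [h2 l2] := hilo_ge0 hL2.
  have lh1 := lo_le_hi hL1 o1. have lh2 := lo_le_hi hL2 o2.
  have [d1 [d2 [hd1 [hd2 [t1 [t2 t3]]]]]] := choose_d (conj l1 lh1) (conj l2 lh2) hd.
  have [q1 [r1 E1]] := IHA L hL1 o1 d1 hd1.
  have [q2 [r2 E2]] := IHB _ hL2 o2 d2 hd2.
  have d0 : 0 <= d by have := Rmax_l 0 (Rmax (lo A L - hi B (shL L (sz (CT A))))
                            (lo B (shL L (sz (CT A))) - hi A L)); lra.
  have [Y [Y1 Y2]] := tri_exists (a:=d1) (b:=d2) (c:=d) ltac:(lra) ltac:(lra) d0 t1 t2 t3.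
  have [f2 [if2 [f2a f2b]]] := rigid (P1 := q2 0%N) (P2 := q2 (snk (CT B))) (Q1 := (0,0)) (Q2 := Y)
     ltac:(by rewrite E2 Y1).
  have [f1 [if1 [f1a f1b]]] := rigid (P1 := q1 0%N) (P2 := q1 (snk (CT A))) (Q1 := Y) (Q2 := (d,0))
     ltac:(by rewrite E1 Y2).
  have [R1 [R2 R3]] := real_ser (inv_CT A) (inv_CT B) (realises_isom if1 r1)
      (realises_isom if2 r2) ltac:(by rewrite /= f1a f2b).
  eexists; split; first exact: R1.
  cbv beta; by rewrite R2 R3 /= f2a f1b dist2_x0.
- change (CT (SPpar A B)) with (par (CT A) (CT B)).
  move=> [o1 [o2 [c1 c2]]] d /= hd.
  have hL1 := nn_p1 hL. have hL2 := nn_p2 hL.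
  have hd1 : lo A L <= d <= hi A L.
  { have := Rmax_l (lo A L) (lo B (shL L (sz (CT A)))).
    have := Rmin_l (hi A L) (hi B (shL L (sz (CT A)))). lra. }
  have hd2 : lo B (shL L (sz (CT A))) <= d <= hi B (shL L (sz (CT A))).
  { have := Rmax_r (lo A L) (lo B (shL L (sz (CT A)))).
    have := Rmin_r (hi A L) (hi B (shL L (sz (CT A)))). lra. }
  have [q1 [r1 E1]] := IHA L hL1 o1 d hd1.
  have [q2 [r2 E2]] := IHB _ hL2 o2 d hd2.
  have [f2 [if2 [f2a f2b]]] := rigid (P1 := q2 0%N) (P2 := q2 (snk (CT B)))
     (Q1 := q1 0%N) (Q2 := q1 (snk (CT A))) ltac:(by rewrite E2 E1).
  have [R1 [R2 R3]] := real_par (inv_CT A) (inv_CT B) r1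
      (realises_isom if2 r2) (esym f2a) (esym f2b).
  eexists; split; first exact: R1.
  cbv beta; by rewrite R2 R3.
Qed.
End RealPart.

Definition joins c j x y := ends c j = (x,y) \/ ends c j = (y,x).

Definition cpath c a b k (v e : nat -> nat) :=
  v 0 = a /\ v k = b /\
  (forall i j, i <= k -> j <= k -> v i = v j -> i = j) /\
  (forall i j, i < k -> j < k -> e i = e j -> i = j) /\
  (forall i, i < k -> e i < sz c /\ joins c (e i) (v i) (v i.+1)) /\
  (forall i, i <= k -> v i < nv c).

Definition cyc c m (v e : nat -> nat) :=
  1 < m /\ v m = v 0 /\
  (forall i j, i < m -> j < m -> v i = v j -> i = j) /\
  (forall i j, i < m -> j < m -> e i = e j -> i = j) /\
  (forall i, i < m -> e i < sz c /\ joins c (e i) (v i) (v i.+1)) /\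
  (forall i, i <= m -> v i < nv c).

Definition emb c' c (f h : nat -> nat) :=
  (forall x, x < nv c' -> f x < nv c) /\
  (forall x y, x < nv c' -> y < nv c' -> f x = f y -> x = y) /\
  (forall i j, h i = h j -> i = j) /\
  (forall i, i < sz c' -> h i < sz c /\ ends c (h i) = (f (ends c' i).1, f (ends c' i).2)).

Lemma joins_emb c' c f h j x y : emb c' c f h -> j < sz c' -> joins c' j x y ->
  joins c (h j) (f x) (f y).
Proof.
move=> [_ [_ [_ he]]] Hj; rewrite /joins; have [_ ->] := he j Hj.
by case=> ->; [left|right].
Qed.

Lemma cyc_emb c' c f h m v e : emb c' c f h -> cyc c' m v e ->
  cyc c m (fun i => f (v i)) (fun i => h (e i)).
Proof.
move=> E; have E' := E; move: E' => [fb [fi [hi he]]] [m2 [vm [vi [ei [ee vb]]]]].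
split => //. split; first by rewrite vm. split.
{ move=> i j Hi Hj /fi H; apply: vi => //; apply: H; apply: vb; slia. }
split; first by move=> i j Hi Hj /hi; apply: ei.
split; last by move=> i Hi; apply: fb; apply: vb.
move=> i Hi; have [e1 e2] := ee i Hi; split; first by have [] := he _ e1.
exact: (joins_emb E e1 e2).
Qed.

Lemma path_emb c' c f h a b k v e : emb c' c f h -> cpath c' a b k v e ->
  cpath c (f a) (f b) k (fun i => f (v i)) (fun i => h (e i)).
Proof.
move=> E; have E' := E; move: E' => [fb [fi [hi he]]] [v0 [vk [vi [ei [ee vb]]]]].
split; first by rewrite v0. split; first by rewrite vk. split.
{ move=> i j Hi Hj /fi H; apply: vi => //; apply: H; apply: vb; slia. }
split; first by move=> i j Hi Hj /hi; apply: ei.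
split; last by move=> i Hi; apply: fb; apply: vb.
move=> i Hi; have [e1 e2] := ee i Hi; split; first by have [] := he _ e1.
exact: (joins_emb E e1 e2).
Qed.

Lemma emb_s1 c1 c2 : cinv c1 -> cinv c2 -> emb c1 (ser c1 c2) (fser c1 c2) id.
Proof.
move=> [s1 [t1 [t1n [z1 e1]]]] [s2 [t2 [t2n [z2 e2]]]].
split; [|split; [|split]].
- move=> x Hx; rewrite fser_val //=; case: eqP => _; slia.
- move=> x y Hx Hy; rewrite !fser_val //; do 2 case: eqP => ?; slia.
- by [].
- move=> i Hi; rewrite sz_ser ends_ser Hi; split => //; slia.
Qed.

Lemma emb_s2 c1 c2 : cinv c1 -> cinv c2 -> emb c2 (ser c1 c2) id (fun i => i + sz c1).
Proof.
move=> [s1 [t1 [t1n [z1 e1]]]] [s2 [t2 [t2n [z2 e2]]]].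
split; [|split; [|split]].
- move=> x Hx /=; slia.
- by [].
- move=> i j /= H; slia.
- move=> i Hi; rewrite sz_ser ends_ser.
  have -> : (i + sz c1 < sz c1) = false by apply/negbTE; rewrite -leqNgt; slia.
  rewrite addnK; split; [slia|by case: (ends c2 i)].
Qed.

Lemma emb_p1 c1 c2 : cinv c1 -> cinv c2 -> emb c1 (par c1 c2) id id.
Proof.
move=> [s1 [t1 [t1n [z1 e1]]]] [s2 [t2 [t2n [z2 e2]]]].
split; [|split; [|split]].
- move=> x Hx /=; slia.
- by [].
- by [].
- move=> i Hi; rewrite sz_par ends_par ?Hi; last slia. split; [slia|by case: (ends c1 i)].
Qed.

Lemma emb_p2 c1 c2 : cinv c1 -> cinv c2 -> emb c2 (par c1 c2) (fpar c1 c2) (fun i => i + sz c1).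
Proof.
move=> [s1 [t1 [t1n [z1 e1]]]] [s2 [t2 [t2n [z2 e2]]]].
split; [|split; [|split]].
- move=> x Hx; rewrite fpar_val //=; (case: eqP => ?; [slia|]); (case: eqP => ?; [slia|]).
  case: (ltnP (snk c2) x) => ? /=; slia.
- move=> x y Hx Hy; rewrite !fpar_val //.
  (case: eqP => ?; [|case: eqP => ?]); (case: eqP => ?; [|case: eqP => ?]);
    try slia; case: (ltnP (snk c2) x) => ? /=; case: (ltnP (snk c2) y) => ? /=; slia.
- move=> i j /= H; slia.
- move=> i Hi; rewrite sz_par ends_par; last slia.
  have -> : (i + sz c1 < sz c1) = false by apply/negbTE; rewrite -leqNgt; slia.
  rewrite addnK; split => //; slia.
Qed.

Lemma path_pos c t k v e : 0 < t -> cpath c 0 t k v e -> 0 < k.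
Proof. move=> Ht [v0 [vk _]]; case: k vk => // vk; move: Ht; rewrite -vk v0 //. Qed.

Lemma snk_ser c1 c2 : snk (ser c1 c2) = fser c1 c2 (snk c1).
Proof. by []. Qed.

Lemma path_ser c1 c2 k1 v1 e1 k2 v2 e2 : cinv c1 -> cinv c2 ->
  cpath c1 0 (snk c1) k1 v1 e1 -> cpath c2 0 (snk c2) k2 v2 e2 ->
  cpath (ser c1 c2) 0 (snk (ser c1 c2)) (k2 + k1)
    (fun i => if i <= k2 then v2 i else fser c1 c2 (v1 (i - k2)))
    (fun i => if i < k2 then e2 i + sz c1 else e1 (i - k2)).
Proof.
move=> I1 I2 P1 P2.
have E1 := emb_s1 I1 I2. have E2 := emb_s2 I1 I2.
have k1p := path_pos (proj1 (proj2 I1)) P1. have k2p := path_pos (proj1 (proj2 I2)) P2.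
move: (I1) (I2) => [s1 [t1 [t1n [z1 ee1]]]] [s2 [t2 [t2n [z2 ee2]]]].
move: (E1) => [fb [fi _]].
move: P1 P2 => [v10 [v1k [v1i [e1i [e1e v1b]]]]] [v20 [v2k [v2i [e2i [e2e v2b]]]]].
set v := fun i => _. set e := fun i => _.
have vR : forall i, k2 <= i -> v i = fser c1 c2 (v1 (i - k2)).
{ move=> i Hi; rewrite /v; case: ifP => // H.
  have -> : i = k2 by slia. by rewrite subnn v10 v2k fser_val // eqxx. }
have fge : forall j, 0 < j <= k1 -> nv c2 <= fser c1 c2 (v1 j).
{ move=> j Hj; rewrite fser_val //; case: eqP => H.
  - have := v1i j 0 ltac:(slia) ltac:(slia) ltac:(by rewrite H v10). slia.
  - slia. }
split; first by rewrite /v /= v20.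
split; first by rewrite vR ?addKn ?v1k ?snk_ser //; slia.
split.
{ move=> i j Hi Hj.
  case: (leqP i k2) => Ha; case: (leqP j k2) => Hb.
  - rewrite /v Ha Hb; exact: v2i.
  - rewrite (vR j) ?/v ?Ha; last slia.
    move=> H; have := fge (j - k2) ltac:(slia). have := v2b i Ha. slia.
  - rewrite (vR i) ?/v ?Hb; last slia.
    move=> H; have := fge (i - k2) ltac:(slia). have := v2b j Hb. slia.
  - rewrite (vR i) ?(vR j); try slia.
    move=> /fi H. have := v1i (i - k2) (j - k2) ltac:(slia) ltac:(slia) (H (v1b (i - k2) ltac:(slia)) (v1b (j - k2) ltac:(slia))).
    slia. }
split.
{ move=> i j Hi Hj; rewrite /e.
  case: (ltnP i k2) => Ha; case: (ltnP j k2) => Hb.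
  - move=> H; apply: e2i => //; slia.
  - have [H1 _] := e1e (j - k2) ltac:(slia). have [H2 _] := e2e i Ha. slia.
  - have [H1 _] := e1e (i - k2) ltac:(slia). have [H2 _] := e2e j Hb. slia.
  - move=> H; have := e1i (i - k2) (j - k2) ltac:(slia) ltac:(slia) H. slia. }
split.
{ move=> i Hi; rewrite /e. case: (ltnP i k2) => Ha.
  - have [H1 H2] := e2e i Ha.
    have J := joins_emb E2 H1 H2.
    have ->: v i = v2 i by rewrite /v ifT //; slia.
    case: (ltnP i.+1 k2) => Hb.
    + have ->: v i.+1 = v2 i.+1 by rewrite /v ifT //; slia.
      split; [rewrite sz_ser; slia|exact: J].
    + rewrite vR // (_ : i.+1 - k2 = 0); last slia.
      rewrite v10 fser_val // eqxx -v2k (_ : k2 = i.+1); last slia.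
      split; [rewrite sz_ser; slia|exact: J].
  - have [H1 H2] := e1e (i - k2) ltac:(slia).
    have J := joins_emb E1 H1 H2.
    rewrite !vR; try slia. rewrite (_ : i.+1 - k2 = (i - k2).+1); last slia.
    split; [rewrite sz_ser; slia|exact: J]. }
move=> i Hi. case: (leqP i k2) => Ha.
- rewrite /v Ha /=. have := v2b i Ha. slia.
- rewrite vR; last slia. apply: fb; apply: v1b; slia.
Qed.

Lemma joins_sym c j x y : joins c j x y -> joins c j y x.
Proof. by case=> H; [right|left]. Qed.

Lemma snk_par c1 c2 : snk (par c1 c2) = snk c1.
Proof. by []. Qed.

Lemma cyc_par c1 c2 k v1 e1 r v2 e2 : cinv c1 -> cinv c2 ->
  cpath c1 0 (snk c1) k v1 e1 -> cpath c2 0 (snk c2) r v2 e2 ->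
  cyc (par c1 c2) (k + r)
    (fun i => if i <= k then v1 i else fpar c1 c2 (v2 (k + r - i)))
    (fun i => if i < k then e1 i else e2 (k + r - 1 - i) + sz c1).
Proof.
move=> I1 I2 P1 P2.
have E1 := emb_p1 I1 I2. have E2 := emb_p2 I1 I2.
have k1p := path_pos (proj1 (proj2 I1)) P1. have k2p := path_pos (proj1 (proj2 I2)) P2.
move: (I1) (I2) => [s1 [t1 [t1n [z1 ee1]]]] [s2 [t2 [t2n [z2 ee2]]]].
move: (E2) => [fb [fi _]].
move: P1 P2 => [v10 [v1k [v1i [e1i [e1e v1b]]]]] [v20 [v2k [v2i [e2i [e2e v2b]]]]].
set v := fun i => _. set e := fun i => _.
have vR : forall i, k <= i -> v i = fpar c1 c2 (v2 (k + r - i)).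
{ move=> i Hi; rewrite /v; case: ifP => // H.
  have -> : i = k by slia. by rewrite addKn v2k v1k fpar_val // eqxx; case: eqP => // H0; slia. }
have fge : forall j, 0 < j < r -> nv c1 <= fpar c1 c2 (v2 j).
{ move=> j Hj; rewrite fpar_val //.
  have n0 : v2 j <> 0.
  { move=> H. have := v2i j 0 ltac:(slia) ltac:(slia) ltac:(by rewrite H v20). slia. }
  have nt : v2 j <> snk c2.
  { move=> H. have := v2i j r ltac:(slia) ltac:(slia) ltac:(by rewrite H v2k). slia. }
  (case: eqP => ?; [slia|]); (case: eqP => ?; [slia|]).
  case: (ltnP (snk c2) (v2 j)) => ? /=; slia. }
split; first slia.
split. rewrite (vR (k + r)); last slia. have -> : k + r - (k + r) = 0 by slia. by rewrite v20 fpar_val // eqxx /v v10.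
split.
{ move=> i j Hi Hj.
  case: (leqP i k) => Ha; case: (leqP j k) => Hb.
  - rewrite /v Ha Hb; apply: v1i; slia.
  - rewrite (vR j) ?/v ?Ha; last slia.
    move=> H; have := fge (k + r - j) ltac:(slia). have := v1b i Ha. slia.
  - rewrite (vR i) ?/v ?Hb; last slia.
    move=> H; have := fge (k + r - i) ltac:(slia). have := v1b j Hb. slia.
  - rewrite (vR i) ?(vR j); try slia.
    move=> /fi H. have := v2i (k + r - i) (k + r - j) ltac:(slia) ltac:(slia)
      (H (v2b (k + r - i) ltac:(slia)) (v2b (k + r - j) ltac:(slia))).
    slia. }
split.
{ move=> i j Hi Hj; rewrite /e.
  case: (ltnP i k) => Ha; case: (ltnP j k) => Hb.
  - apply: e1i => //.
  - have [H1 _] := e1e i Ha. have [H2 _] := e2e (k + r - 1 - j) ltac:(slia). slia.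
  - have [H1 _] := e1e j Hb. have [H2 _] := e2e (k + r - 1 - i) ltac:(slia). slia.
  - move=> H; have := e2i (k + r - 1 - i) (k + r - 1 - j) ltac:(slia) ltac:(slia) ltac:(slia).
    slia. }
split.
{ move=> i Hi; rewrite /e. case: (ltnP i k) => Ha.
  - have [H1 H2] := e1e i Ha.
    have J := joins_emb E1 H1 H2.
    have ->: v i = v1 i by rewrite /v ifT //; slia.
    have ->: v i.+1 = v1 i.+1 by rewrite /v ifT //; slia.
    split; [rewrite sz_par; slia|exact: J].
  - have [H1 H2] := e2e (k + r - 1 - i) ltac:(slia).
    have J := joins_emb E2 H1 H2.
    rewrite !vR; try slia.
    rewrite (_ : k + r - i = (k + r - 1 - i).+1); last slia.
    rewrite (_ : k + r - i.+1 = k + r - 1 - i); last slia.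
    split; [rewrite sz_par; slia|exact: joins_sym J]. }
move=> i Hi. case: (leqP i k) => Ha.
- rewrite /v Ha /=. have := v1b i Ha. slia.
- rewrite vR; last slia. apply: fb; apply: v2b; slia.
Qed.

Section RealPart2.
Local Open Scope R_scope.

Fixpoint rsum (f : nat -> R) (k : nat) : R :=
  match k with 0%N => 0 | S k => rsum f k + f k end.

Lemma rsum_ext f g k : (forall i, (i < k)%N -> f i = g i) -> rsum f k = rsum g k.
Proof.
elim: k => //= k IH H; rewrite IH ?H //; move=> i Hi; apply: H; slia.
Qed.

Lemma rsum_add f a b : rsum f (a + b)%N = rsum f a + rsum (fun i => f (i + a)%N) b.
Proof.
elim: b => [|b IH] /=; first by rewrite addn0; ring.
by rewrite addnS /= IH addnC; ring.
Qed.

Lemma rsum_shift1 f k : rsum f k.+1 = f 0%N + rsum (fun i => f i.+1) k.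
Proof.
elim: k => [|k IH] /=; first ring.
rewrite /= in IH. rewrite IH; ring.
Qed.

Lemma rsum_rev f k : rsum (fun i => f (k - 1 - i)%N) k = rsum f k.
Proof.
elim: k f => [|k IH] f; first by [].
rewrite [in LHS]rsum_shift1.
rewrite (rsum_ext (g := fun i => f (k - 1 - i)%N)); last by move=> i Hi; f_equal; slia.
rewrite IH /=. have -> : (k.+1 - 1 - 0 = k)%N by slia. ring.
Qed.

Lemma rsum_ge0 f k : (forall i, (i < k)%N -> 0 <= f i) -> 0 <= rsum f k.
Proof.
elim: k => [|k IH] H /=; first lra.
have := H k (ltnSn k). have := IH (fun i Hi => H i (ltnW Hi)). lra.
Qed.

Definition bad c L := exists m v e j, cyc c m v e /\ (j < m)%N /\
  rsum (fun i => L (e i)) m < 2 * L (e j).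

Lemma bad_emb c' c f h L : emb c' c f h -> bad c' (fun i => L (h i)) -> bad c L.
Proof.
move=> E [m [v [e [j [C [Hj Hs]]]]]].
exists m, (fun i => f (v i)), (fun i => h (e i)), j. split; [exact: cyc_emb E C|by split].
Qed.

Lemma K2_path : cpath K2 0 1 1 id (fun _ => 0%N).
Proof.
split => //. split => //. split; first by move=> i j Hi Hj.
split; first by move=> i j Hi Hj; slia.
split; last by move=> i Hi /=; slia.
move=> i Hi; have -> : i = 0%N by slia. by split => //; left.
Qed.

Lemma hi_wit T L : exists k v e, cpath (CT T) 0 (snk (CT T)) k v e /\
  rsum (fun i => L (e i)) k <= hi T L.
Proof.
elim: T L => [|A IHA B IHB|A IHA B IHB] L.
- exists 1%N, id, (fun _ => 0%N); split; [exact: K2_path|rewrite /=; lra].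
- have [k1 [v1 [e1 [P1 S1]]]] := IHA L.
  have [k2 [v2 [e2 [P2 S2]]]] := IHB (shL L (sz (CT A))).
  have P := path_ser (inv_CT A) (inv_CT B) P1 P2.
  do 3 eexists; split; first exact: P.
  rewrite rsum_add /=.
  rewrite (rsum_ext (g := fun i => shL L (sz (CT A)) (e2 i))); last first.
  { move=> i Hi; by rewrite Hi. }
  rewrite (rsum_ext (f := fun i => L _) (g := fun i => L (e1 i))); last first.
  { move=> i Hi; rewrite ifF ?addnK //; apply/negbTE; rewrite -leqNgt; slia. }
  lra.
- have [k1 [v1 [e1 [P1 S1]]]] := IHA L.
  have [k2 [v2 [e2 [P2 S2]]]] := IHB (shL L (sz (CT A))).
  rewrite /=. case: (Rle_dec (hi A L) (hi B (shL L (sz (CT A))))) => Hc.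
  + have P := path_emb (emb_p1 (inv_CT A) (inv_CT B)) P1.
    do 3 eexists; split; first exact: P.
    rewrite Rmin_left //.
  + have P := path_emb (emb_p2 (inv_CT A) (inv_CT B)) P2.
    move: P. have [s1 _] := inv_CT A. have [s2 _] := inv_CT B.
    rewrite fpar_val // eqxx fpar_val // eqxx. case: eqP => H.
    { have := (proj1 (proj2 (inv_CT B))); rewrite -H; slia. }
    move=> P. do 3 eexists; split; first exact: P.
    rewrite Rmin_right /=; [exact: S2|lra].
Qed.

Lemma lo_wit T L : cnonneg (CT T) L -> 0 < lo T L ->
  exists k v e j, cpath (CT T) 0 (snk (CT T)) k v e /\ (j < k)%N /\
  lo T L <= 2 * L (e j) - rsum (fun i => L (e i)) k.
Proof.
elim: T L => [|A IHA B IHB|A IHA B IHB] L hL Hlo.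
- exists 1%N, id, (fun _ => 0%N), 0%N; split; [exact: K2_path|split=>//; rewrite /=; lra].
- have hL1 := nn_s1 hL. have hL2 := nn_s2 hL.
  have [h1 l1] := hilo_ge0 hL1. have [h2 l2] := hilo_ge0 hL2.
  move: Hlo; rewrite /= => Hlo.
  set L2 := shL L (sz (CT A)) in hL2 h2 l2 Hlo *.
  have Hs : forall k1 v1 e1 k2 v2 e2, cpath (CT A) 0 (snk (CT A)) k1 v1 e1 ->
    cpath (CT B) 0 (snk (CT B)) k2 v2 e2 ->
    exists v e, cpath (CT (SPser A B)) 0 (snk (CT (SPser A B))) (k2 + k1) v e /\
     (forall j, (j < k1)%N -> e (j + k2)%N = e1 j) /\
     (forall j, (j < k2)%N -> L (e j) = L2 (e2 j)) /\
     rsum (fun i => L (e i)) (k2 + k1) = rsum (fun i => L2 (e2 i)) k2 + rsum (fun i => L (e1 i)) k1.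
  { move=> k1 v1 e1 k2 v2 e2 P1 P2.
    have P := path_ser (inv_CT A) (inv_CT B) P1 P2.
    do 2 eexists; split; first exact: P.
    split; first by move=> j Hj /=; rewrite ifF ?addnK //; apply/negbTE; rewrite -leqNgt; slia.
    split; first by move=> j Hj /=; rewrite Hj.
    rewrite rsum_add /=. f_equal.
    - apply: rsum_ext => i Hi; by rewrite Hi.
    - apply: rsum_ext => i Hi; rewrite ifF ?addnK //; apply/negbTE; rewrite -leqNgt; slia. }
  case: (Rle_dec (lo B L2 - hi A L) (lo A L - hi B L2)) => Hc.
  + have [Hp E] : 0 < lo A L - hi B L2 /\
      Rmax 0 (Rmax (lo A L - hi B L2) (lo B L2 - hi A L)) = lo A L - hi B L2.
    { move: Hlo; unfold Rmax; repeat case: Rle_dec => ?; lra. }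
    rewrite E.
    have [k1 [v1 [e1 [j [P1 [Hj S1]]]]]] := IHA L hL1 ltac:(lra).
    have [k2 [v2 [e2 [P2 S2]]]] := hi_wit B L2.
    have [v [e [P [He [He2 Hsum]]]]] := Hs _ _ _ _ _ _ P1 P2.
    exists (k2 + k1)%N, v, e, (j + k2)%N. split; first exact: P. split; first slia.
    rewrite He // Hsum. lra.
  + have [Hp E] : 0 < lo B L2 - hi A L /\
      Rmax 0 (Rmax (lo A L - hi B L2) (lo B L2 - hi A L)) = lo B L2 - hi A L.
    { move: Hlo; unfold Rmax; repeat case: Rle_dec => ?; lra. }
    rewrite E.
    have [k2 [v2 [e2 [j [P2 [Hj S2]]]]]] := IHB L2 hL2 ltac:(lra).
    have [k1 [v1 [e1 [P1 S1]]]] := hi_wit A L.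
    have [v [e [P [He [He2 Hsum]]]]] := Hs _ _ _ _ _ _ P1 P2.
    exists (k2 + k1)%N, v, e, j. split; first exact: P. split; first slia.
    rewrite He2 // Hsum. lra.
- have hL1 := nn_p1 hL. have hL2 := nn_p2 hL.
  move: Hlo; rewrite /=. set L2 := shL L (sz (CT A)).
  case: (Rle_dec (lo B L2) (lo A L)) => Hc.
  + rewrite Rmax_left // => Hp.
    have [k1 [v1 [e1 [j [P1 [Hj S1]]]]]] := IHA L hL1 Hp.
    have P := path_emb (emb_p1 (inv_CT A) (inv_CT B)) P1.
    exists k1, (fun i => v1 i), (fun i => e1 i), j; split; [exact: P|split=>//].
  + rewrite Rmax_right; last lra. move=> Hp.
    have [k2 [v2 [e2 [j [P2 [Hj S2]]]]]] := IHB L2 hL2 Hp.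
    have P := path_emb (emb_p2 (inv_CT A) (inv_CT B)) P2.
    move: P. have [s1 _] := inv_CT A. have [s2 _] := inv_CT B.
    rewrite fpar_val // eqxx fpar_val // eqxx. case: eqP => H.
    { have := (proj1 (proj2 (inv_CT B))); rewrite -H; slia. }
    move=> P. exists k2, (fun i => fpar (CT A) (CT B) (v2 i)), (fun i => (e2 i + sz (CT A))%N), j; split; first exact: P. split => //.
Qed.

Lemma cyc_par_sum c1 k e1 r e2 (L : nat -> R) :
  rsum (fun i => L (if (i < k)%N then e1 i else (e2 (k + r - 1 - i) + sz c1)%N)) (k + r)
  = rsum (fun i => L (e1 i)) k + rsum (fun i => L (e2 i + sz c1)%N) r.
Proof.
rewrite rsum_add. f_equal.
- apply: rsum_ext => i Hi; by rewrite Hi.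
- rewrite -rsum_rev. apply: rsum_ext => i Hi.
  rewrite ifF; last by apply/negbTE; rewrite -leqNgt; slia.
  by rewrite (_ : (k + r - 1 - (r - 1 - i + k) = i)%N) //; slia.
Qed.

Lemma notok_bad T L : cnonneg (CT T) L -> ~ ok T L -> bad (CT T) L.
Proof.
elim: T L => [|A IHA B IHB|A IHA B IHB] L hL Hok.
- by case: Hok.
- have hL1 := nn_s1 hL. have hL2 := nn_s2 hL.
  case: (Classical_Prop.classic (ok A L)) => H1.
  + have H2 : ~ ok B (shL L (sz (CT A))) by move=> H2; apply: Hok.
    exact: (bad_emb (emb_s2 (inv_CT A) (inv_CT B)) (IHB _ hL2 H2)).
  + exact: (bad_emb (emb_s1 (inv_CT A) (inv_CT B)) (IHA _ hL1 H1)).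
- have hL1 := nn_p1 hL. have hL2 := nn_p2 hL.
  have [h1 l1] := hilo_ge0 hL1. have [h2 l2] := hilo_ge0 hL2.
  set L2 := shL L (sz (CT A)) in hL2 h1 l1 h2 l2 *.
  case: (Classical_Prop.classic (ok A L)) => H1; last first.
  { exact: (bad_emb (emb_p1 (inv_CT A) (inv_CT B)) (IHA _ hL1 H1)). }
  case: (Classical_Prop.classic (ok B L2)) => H2; last first.
  { exact: (bad_emb (emb_p2 (inv_CT A) (inv_CT B)) (IHB _ hL2 H2)). }
  change (CT (SPpar A B)) with (par (CT A) (CT B)).
  case: (Rle_dec (lo A L) (hi B L2)) => H3.
  + have H4 : ~ (lo B L2 <= hi A L) by move=> H4; apply: Hok.
    have [k2 [v2 [e2 [j [P2 [Hj S2]]]]]] := lo_wit hL2 ltac:(lra).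
    have [k1 [v1 [e1 [P1 S1]]]] := hi_wit A L.
    have C := cyc_par (inv_CT A) (inv_CT B) P1 P2.
    do 3 eexists. exists (k1 + k2 - 1 - j)%N. split; first exact: C.
    split; first slia.
    rewrite (cyc_par_sum (CT A) k1 e1 k2 e2 L). rewrite ifF; last by apply/negbTE; rewrite -leqNgt; slia.
    have -> : (k1 + k2 - 1 - (k1 + k2 - 1 - j) = j)%N by slia.
    have H5 := Rnot_le_lt _ _ H4. rewrite /L2 /shL in S2 H5 *. lra.
  + have [k1 [v1 [e1 [j [P1 [Hj S1]]]]]] := lo_wit hL1 ltac:(lra).
    have [k2 [v2 [e2 [P2 S2]]]] := hi_wit B L2.
    have C := cyc_par (inv_CT A) (inv_CT B) P1 P2.
    do 3 eexists. exists j. split; first exact: C.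
    split; first slia.
    rewrite (cyc_par_sum (CT A) k1 e1 k2 e2 L) Hj. have H5 := Rnot_le_lt _ _ H3. rewrite /L2 /shL in S2 S1 H5 *. lra.
Qed.
End RealPart2.

Set Implicit Arguments.
Unset Strict Implicit.

Section M.
Local Open Scope R_scope.

Lemma dist2_refl p : dist2 p p = 0.
Proof. exact: (distance_refl p.1 p.2). Qed.

Lemma chain (y : nat -> R2) a k :
  dist2 (y a) (y (a + k)%N) <= rsum (fun i => dist2 (y (i + a)%N) (y (i + a).+1)) k.
Proof.
elim: k => [|k IH] /=; first by rewrite addn0 dist2_refl; lra.
apply: Rle_trans (dist2_tri _ _ (y (a + k)%N)) _.
rewrite (_ : (a + k.+1 = (k + a).+1)%N); last slia.
rewrite (_ : (a + k = k + a)%N) in IH *; last slia. lra.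
Qed.

Lemma cycle_ineq (y : nat -> R2) m j : y m = y 0%N -> (j < m)%N ->
  2 * dist2 (y j) (y j.+1) <= rsum (fun i => dist2 (y i) (y i.+1)) m.
Proof.
move=> Hm Hj.
have c1 := chain y 0 j. have c2 := chain y j.+1 (m - j.+1).
rewrite (_ : (j.+1 + (m - j.+1) = m)%N) in c2; last slia.
rewrite Hm in c2.
have -> : m = (j.+1 + (m - j.+1))%N by slia.
rewrite rsum_add /=.
rewrite (rsum_ext (g := fun i => dist2 (y (i + 0)%N) (y (i + 0)%N.+1))); last first.
{ move=> i _; by rewrite addn0. }
have t := dist2_tri (y j) (y j.+1) (y 0%N).
rewrite add0n in c1.
have s1 := dist2_sym (y j) (y 0%N). have s2 := dist2_sym (y 0%N) (y j.+1). lra.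
Qed.

End M.

Unset Implicit Arguments.
Theorem mainTheorem5 (G : graph) (l : gE G -> R) :
  loopless G ->
  (forall e : gE G, Rle 0 (l e)) ->
  series_parallel G ->
  (realisable l <->
   forall (VS : {set gV G}) (ES : {set gE G}) (h : is_subgraph VS ES),
     polygonal (subgraph h) ->
     realisable (G := subgraph h) (fun e => l (sval e))).
Proof.
move=> _ l0 [s [t [_ [T [fV [fE [finj [fsurj [fEbij [fends _]]]]]]]]]].
set c := CT T in fV fE finj fsurj fEbij fends *.
have [s0 [t0 [tn [z0 eb]]]] : cinv c := inv_CT T.
pose o0 : 'I_(size (cedges c)) := Ordinal z0.
pose eo k := fE (insubd o0 k).
pose L k := l (eo k).
have nn : cnonneg c L by move=> i _; apply: l0.
have endsE : forall k, (k < sz c)%N ->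
    gends (eo k) = (fV (ends c k).1, fV (ends c k).2) \/
    gends (eo k) = (fV (ends c k).2, fV (ends c k).1).
{ move=> k Hk. have vk : val (insubd o0 k) = k := insubdK o0 Hk.
  have := fends (insubd o0 k). rewrite /= vk. by []. }
split.
- move=> [p hp] VS ES h _. exists (fun x => p (sval x)) => e'. exact: hp (sval e').
- move=> H. case: (Classical_Prop.classic (ok T L)) => Hok.
  + have [q [rq _]] := realise nn Hok (conj (Rle_refl _) (lo_le_hi nn Hok)).
    have exk : forall v, exists k, (k < nv c)%N && (fV k == v).
    { move=> v; have [k Hk Ek] := fsurj v. exists k. by rewrite Hk Ek eqxx. }
    pose kv v := xchoose (exk v).
    have pkv : forall a, (a < nv c)%N -> kv (fV a) = a.
    { move=> a Ha. have /andP [H1 /eqP H2] := xchooseP (exk (fV a)). exact: finj. }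
    exists (fun v => q (kv v)) => g.
    have [gi fEK fEK'] := fEbij. rewrite -(fEK' g). set i := gi g.
    have Hi : (val i < sz c)%N := ltn_ord i.
    have E : eo (val i) = fE i by rewrite /eo valKd.
    have [a1 a2] := eb _ Hi.
    have R := rq _ Hi. rewrite /L E in R.
    have := endsE _ Hi. rewrite E. case=> ->; rewrite /= !pkv //. by rewrite dist2_sym.
  + have [m [v [e [j [C [Hj Hs]]]]]] := notok_bad nn Hok.
    exfalso.
    case: m C Hj Hs => [|[|n]] C Hj Hs; try by have := C.1.
    move: (C) => [_ [vm [vi [ei [ee vb]]]]].
    pose cv (i : 'I_n.+2) := fV (v i).
    pose ce (i : 'I_n.+2) := eo (e i).
    pose VS := cv @: [set: 'I_n.+2].
    pose ES := ce @: [set: 'I_n.+2].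
    have vS : forall i : 'I_n.+2, v (ordS i) = v (val i).+1.
    { case=> k Hk /=. case: (ltnP k.+1 n.+2) => Hl.
      - by rewrite modn_small.
      - have -> : k.+1 = n.+2 by slia.
        by rewrite modnn vm. }
    have ends_ce : forall i : 'I_n.+2, gends (ce i) = (cv i, cv (ordS i)) \/
                                      gends (ce i) = (cv (ordS i), cv i).
    { move=> i. have [H1 H2] := ee i (ltn_ord i).
      rewrite /ce /cv vS. have := endsE _ H1.
      by case: H2 => ->; case=> ->; first [by left | by right]. }
    have cvS : forall i, cv i \in VS by move=> i; apply: imset_f; apply: in_setT.
    have ceS : forall i, ce i \in ES by move=> i; apply: imset_f; apply: in_setT.
    have h : is_subgraph VS ES.
    { move=> g /imsetP [i _ ->]. by case: (ends_ce i) => ->; split; apply: cvS. }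
    pose fV' (i : 'I_n.+2) : gV (subgraph h) := exist (fun x => x \in VS) (cv i) (cvS i).
    pose fE' (i : 'I_n.+2) : gE (subgraph h) := exist (fun x => x \in ES) (ce i) (ceS i).
    have isoE : forall i : 'I_n.+2, gends (fE' i) = (fV' i, fV' (ordS i)) \/
                                    gends (fE' i) = (fV' (ordS i), fV' i).
    { move=> i. case: (ends_ce i) => E; [left|right]; (congr pair; apply: val_inj; by rewrite /= E). }
    have fVinj : injective fV'.
    { move=> i1 i2 /(congr1 val) /= E. apply: val_inj; apply: vi; try apply: ltn_ord.
      apply: finj E; apply: vb; apply: ltnW; apply: ltn_ord. }
    have fEinj : injective fE'.
    { move=> i1 i2 /(congr1 val) /=. rewrite /ce /eo => /(bij_inj fEbij) /(congr1 val).
      have [H1 _] := ee i1 (ltn_ord i1). have [H2 _] := ee i2 (ltn_ord i2).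
      rewrite !insubdK // => E. apply: val_inj; exact: (ei _ _ (ltn_ord i1) (ltn_ord i2) E). }
    have poly : polygonal (subgraph h).
    { exists n, fV', fE'. split; [|split].
      - apply: (inj_card_bij fVinj). rewrite /= card_sig card_ord.
        apply: leq_trans (leq_imset_card _ _) _. by rewrite cardsT card_ord.
      - apply: (inj_card_bij fEinj). rewrite /= card_sig card_ord.
        apply: leq_trans (leq_imset_card _ _) _. by rewrite cardsT card_ord.
      - exact: isoE. }
    have [p hp] := H VS ES h poly.
    pose y k := p (fV' (inord (k %% n.+2))).
    have yd : forall i, (i < n.+2)%N -> dist2 (y i) (y i.+1) = L (e i).
    { move=> i Hi. pose io : 'I_n.+2 := inord i.
      have vio : nat_of_ord io = i by rewrite /io inordK.
      have E1 : inord (i %% n.+2) = io by rewrite modn_small.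
      have E2 : inord (i.+1 %% n.+2) = ordS io.
      { apply: val_inj. rewrite /= inordK ?vio //. by apply: ltn_pmod. }
      rewrite /y E1 E2.
      have -> : L (e i) = l (sval (fE' io)) by rewrite /= /ce vio.
      rewrite -(hp (fE' io)).
      case: (isoE io) => ->; first done.
      by rewrite dist2_sym. }
    have ym : y n.+2 = y 0%N by rewrite /y modnn mod0n.
    have := cycle_ineq ym Hj.
    rewrite (rsum_ext (g := fun i => L (e i))); last by move=> i Hi; apply: yd.
    rewrite yd //. lra.
Qed.
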